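(* Let $\mathbb{F}=\{(W_i,v_i)\}_{i\in I}$ be a Bessel family in a Krein space $\mathbb{K}$, let $M=\overline{\sum_{i\in I}W_i}$ and $M^0=M\cap M^{[\perp]}$. If there exist constants $0<A\leq B$ such that $$A[f,f]\leq\sum_{i\in I}v_i^2\,\big|[\pi_{JM}\pi_{W_i}J\pi_M(f),f]\big|\leq B[f,f]\quad\text{for every } f\in M,$$ then the deficiency subspace $M\ominus M^0$ is a (closed) uniformly $J$-positive subspace of $M$. Moreover, if $\mathbb{F}$ is a fusion frame for the Hilbert space $(M,[\cdot,\cdot]_J)$ and $M\ominus M^0$ is a uniformly $J$-positive subspace, then conversely there exist constants $0<A\leq B$ such that $$A[f,f]\leq\sum_{i\in I}v_i^2\,\big|[\pi_{JM}\pi_{W_i}J\pi_M(f),f]\big|\leq B[f,f]\quad\text{for every } f\in M.$$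
   Context: $(\mathbb{K},[\cdot,\cdot],J)$ is a Krein space with fundamental symmetry $J$ and associated Hilbert space inner product $[f,g]_J=[Jf,g]$, norm $\|\cdot\|_J$. For a closed subspace $X$ of $\mathbb{K}$, $\pi_X$ denotes the orthogonal projection onto $X$ in the Hilbert space $(\mathbb{K},[\cdot,\cdot]_J)$; one has $\pi_{JX}=J\pi_XJ$. $\{W_i\}_{i\in I}$ are closed subspaces of $\mathbb{K}$ and $v_i>0$ are weights; $\mathbb{F}$ is a Bessel family meaning $\sum_{i\in I}v_i^2\|\pi_{W_i}f\|_J^2\leq C\|f\|_J^2$ for some $C>0$ and all $f\in\mathbb{K}$. $M^{[\perp]}$ is the $[\cdot,\cdot]$-orthogonal complement of $M$, $M^0=M\cap M^{[\perp]}$ is the isotropic part of $M$, and $M\ominus M^0=M\cap (M^0)^{\perp}$ (orthogonal complement taken in $(\mathbb{K},[\cdot,\cdot]_J)$). A subspace $N$ is uniformly $J$-positive if there is $\gamma>0$ with $[f,f]\geq\gamma\|f\|_J^2$ for all $f\in N$. $\mathbb{F}$ being a fusion frame for $(M,[\cdot,\cdot]_J)$ means there exist $0<A'\leq B'$ with $A'\|f\|_J^2\leq\sum_{i\in I}v_i^2\|\pi_{W_i}f\|_J^2\leq B'\|f\|_J^2$ for all $f\in M$. *)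

(* Defs.v *)
From HB Require Import structures.
From mathcomp Require Import all_boot all_order all_algebra.
From mathcomp Require Import boolp classical_sets reals ereal esum.
From mathcomp Require Import complex.
Set Implicit Arguments. Unset Strict Implicit. Unset Printing Implicit Defensive.
Import Order.TTheory GRing.Theory Num.Theory Num.Def.
Local Open Scope ring_scope.
Local Open Scope classical_set_scope.

Section Krein.
Variables (R : realType) (V : lmodType R[i]).
Variables (ip : V -> V -> R[i]) (J : V -> V).

Definition jip (f g : V) : R[i] := ip (J f) g.
Definition jnorm (f : V) : R := Num.sqrt (complex.Re (jip f f)).

Definition jconverges (u : nat -> V) (x : V) : Prop :=
  forall e : R, 0 < e -> exists N : nat, forall n, (N <= n)%N -> jnorm (u n - x) < e.
Definition jcauchy (u : nat -> V) : Prop :=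
  forall e : R, 0 < e -> exists N : nat,
    forall n m, (N <= n)%N -> (N <= m)%N -> jnorm (u n - u m) < e.

Definition krein_space : Prop :=
  (forall (a : R[i]) (x y z : V), ip (a *: x + y) z = a * ip x z + ip y z) /\
  (forall x y : V, ip y x = conjC (ip x y)) /\
  (forall (a : R[i]) (x y : V), J (a *: x + y) = a *: J x + J y) /\
  (forall x : V, J (J x) = x) /\
  (forall x y : V, ip (J x) y = ip x (J y)) /\
  (forall x : V, x != 0 -> 0 < jip x x) /\
  (forall u : nat -> V, jcauchy u -> exists x, jconverges u x).

Definition subspace (X : set V) : Prop :=
  X 0 /\ forall (a : R[i]) (x y : V), X x -> X y -> X (a *: x + y).
Definition jclosed (X : set V) : Prop :=
  forall (u : nat -> V) (x : V), (forall n, X (u n)) -> jconverges u x -> X x.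
Definition closed_subspace (X : set V) : Prop := subspace X /\ jclosed X.

Definition jclosure (X : set V) : set V :=
  [set f | forall e : R, 0 < e -> exists2 g, X g & jnorm (f - g) < e].

(* pi_X : orthogonal projection onto X in (K, [.,.]_J): the (unique, for X a
   closed subspace) p in X with f - p [.,.]_J-orthogonal to X. *)
Definition proj (X : set V) (f : V) : V :=
  xget 0 [set p | X p /\ forall x, X x -> jip (f - p) x = 0].

Definition Jimage (X : set V) : set V := J @` X.

Definition korth (X : set V) : set V := [set f | forall g, X g -> ip f g = 0].
Definition jorth (X : set V) : set V := [set f | forall g, X g -> jip f g = 0].

Definition isotropic_part (X : set V) : set V := X `&` korth X.
Definition deficiency (X : set V) : set V := X `&` jorth (isotropic_part X).

Definition uniformly_J_positive (N : set V) : Prop :=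
  exists2 gamma : R, 0 < gamma &
    forall f, N f -> gamma * jnorm f ^+ 2 <= complex.Re (ip f f).

Variables (I : choiceType) (W : I -> set V) (v : I -> R).

Definition fusion_sum (f : V) : \bar R :=
  (\esum_(i in [set: I]) ((v i ^+ 2 * jnorm (proj (W i) f) ^+ 2)%:E))%E.

Definition bessel_family : Prop :=
  exists2 C : R, 0 < C & forall f, (fusion_sum f <= (C * jnorm f ^+ 2)%:E)%E.

Definition fusion_frame_for (M : set V) : Prop :=
  exists A' B' : R, [/\ 0 < A', A' <= B' &
    forall f, M f ->
      ((A' * jnorm f ^+ 2)%:E <= fusion_sum f)%E /\
      (fusion_sum f <= (B' * jnorm f ^+ 2)%:E)%E].

Definition sum_span : set V :=
  [set f | exists (n : nat) (idx : 'I_n -> I) (w : 'I_n -> V),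
     (forall k, W (idx k) (w k)) /\ f = \sum_(k < n) w k].
Definition closed_sum : set V := jclosure sum_span.

Definition krein_sum (M : set V) (f : V) : \bar R :=
  (\esum_(i in [set: I])
     ((v i ^+ 2 * complex.Re `| ip (proj (Jimage M) (proj (W i) (J (proj M f)))) f |)%:E))%E.

(* A[f,f] <= sum <= B[f,f] on M ([f,f] is real by Hermitian symmetry) *)
Definition krein_frame_bounds (M : set V) : Prop :=
  exists A B : R, [/\ 0 < A, A <= B &
    forall f, M f ->
      ((A * complex.Re (ip f f))%:E <= krein_sum M f)%E /\
      (krein_sum M f <= (B * complex.Re (ip f f))%:E)%E].

End Krein.

(* Main.v *)
Require Import Defs.
From HB Require Import structures.
From mathcomp Require Import all_boot all_order all_algebra.
From mathcomp Require Import boolp classical_sets reals ereal esum.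
From mathcomp Require Import complex.
From mathcomp Require Import ring lra.
Import Order.TTheory GRing.Theory Num.Theory.
Local Open Scope ring_scope.
Local Open Scope classical_set_scope.
Set Implicit Arguments. Unset Strict Implicit.
Section Cplx.
Variable R : realType.
Implicit Types z w : R[i].
Local Notation Re := complex.Re.
Local Notation Im := complex.Im.

Lemma ReD z w : Re (z + w) = Re z + Re w. Proof. by case: z; case: w. Qed.
Lemma ImD z w : Im (z + w) = Im z + Im w. Proof. by case: z; case: w. Qed.
Lemma ReN z : Re (- z) = - Re z. Proof. by case: z. Qed.
Lemma ImN z : Im (- z) = - Im z. Proof. by case: z. Qed.
Lemma ReB z w : Re (z - w) = Re z - Re w. Proof. by rewrite ReD ReN. Qed.
Lemma ImB z w : Im (z - w) = Im z - Im w. Proof. by rewrite ImD ImN. Qed.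
Lemma ReC (r : R) : Re (r%:C)%C = r. Proof. by []. Qed.
Lemma ImC (r : R) : Im (r%:C)%C = 0. Proof. by []. Qed.
Lemma ReMC (r : R) z : Re ((r%:C)%C * z) = r * Re z.
Proof. by case: z => a b /=; rewrite mul0r subr0. Qed.
Lemma ImMC (r : R) z : Im ((r%:C)%C * z) = r * Im z.
Proof. by case: z => a b /=; rewrite mul0r addr0. Qed.
Lemma ReJ z : Re (z^*) = Re z. Proof. by case: z. Qed.
Lemma ImJ z : Im (z^*) = - Im z. Proof. by case: z. Qed.
Lemma Re0 : Re (0 : R[i]) = 0. Proof. by []. Qed.
Lemma ge0_real z : 0 <= z -> z = ((Re z)%:C)%C.
Proof. move=> h; apply/eqP; rewrite eq_complex /= (ger0_Im h) !eqxx //. Qed.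
Lemma ge0_Re z : 0 <= z -> 0 <= Re z.
Proof. by move=> h; move: h; rewrite lecE /= => /andP[]. Qed.
Lemma mulJ z : z * z^* = ((Re z ^+ 2 + Im z ^+ 2)%:C)%C.
Proof. case: z => a b; apply/eqP; rewrite eq_complex /= !expr2; apply/andP; split; apply/eqP; ring. Qed.
Lemma eqC z w : Re z = Re w -> Im z = Im w -> z = w.
Proof. by case: z; case: w => /= a b c d -> ->. Qed.
Lemma Re_i z : Re ('i%C * z) = - Im z.
Proof. case: z => a b /=; ring. Qed.
Lemma normRC (r : R) : 0 <= r -> `|(r%:C)%C| = (r%:C)%C.
Proof. by move=> h; rewrite ger0_norm // lecR. Qed.
End Cplx.
Section Krein0.
Variables (R : realType) (V : lmodType R[i]) (ip : V -> V -> R[i]) (J : V -> V).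
Hypothesis HK : krein_space ip J.
Local Notation Re := complex.Re.
Local Notation Im := complex.Im.
Local Notation jp := (jip ip J).
Local Notation nrm := (jnorm ip J).

Lemma ipD a x y z : ip (a *: x + y) z = a * ip x z + ip y z.
Proof. by case: HK => h _; apply: h. Qed.
Lemma ipC x y : ip y x = (ip x y)^*.
Proof. by case: HK => _ [h _]; apply: h. Qed.
Lemma JD a x y : J (a *: x + y) = a *: J x + J y.
Proof. by case: HK => _ [] _ [h _]; apply: h. Qed.
Lemma JJ x : J (J x) = x.
Proof. by case: HK => _ [] _ [] _ [h _]; apply: h. Qed.
Lemma ipJ x y : ip (J x) y = ip x (J y).
Proof. by case: HK => _ [] _ [] _ [] _ [h _]; apply: h. Qed.
Lemma jp_gt0 x : x != 0 -> 0 < jp x x.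
Proof. by case: HK => _ [] _ [] _ [] _ [] _ [h _]; apply: h. Qed.
Lemma complete u : jcauchy ip J u -> exists x, jconverges ip J u x.
Proof. by case: HK => _ [] _ [] _ [] _ [] _ [_ h]; apply: h. Qed.

Lemma ip0l z : ip 0 z = 0.
Proof.
have := ipD 1 0 0 z; rewrite scale1r addr0 mul1r => h.
by apply: (addrI (ip 0 z)); rewrite addr0 -h.
Qed.
Lemma ipDl x y z : ip (x + y) z = ip x z + ip y z.
Proof. by have := ipD 1 x y z; rewrite scale1r mul1r. Qed.
Lemma ipZl a x z : ip (a *: x) z = a * ip x z.
Proof. by have := ipD a x 0 z; rewrite addr0 ip0l addr0. Qed.
Lemma ipNl x z : ip (- x) z = - ip x z.
Proof. by rewrite -scaleN1r ipZl mulN1r. Qed.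
Lemma ipBl x y z : ip (x - y) z = ip x z - ip y z.
Proof. by rewrite ipDl ipNl. Qed.
Lemma ip0r z : ip z 0 = 0.
Proof. by rewrite ipC ip0l conjC0. Qed.
Lemma ipDr x y z : ip z (x + y) = ip z x + ip z y.
Proof. by rewrite (ipC (x+y)) (ipC x) (ipC y) ipDl rmorphD. Qed.
Lemma ipZr a x z : ip z (a *: x) = a^* * ip z x.
Proof. by rewrite (ipC (a *: x)) (ipC x) ipZl rmorphM. Qed.
Lemma ipNr x z : ip z (- x) = - ip z x.
Proof. by rewrite (ipC (- x)) (ipC x) ipNl rmorphN. Qed.
Lemma ipBr x y z : ip z (x - y) = ip z x - ip z y.
Proof. by rewrite ipDr ipNr. Qed.

Lemma J0 : J 0 = 0.
Proof.
have := JD 1 0 0; rewrite scale1r addr0 scale1r => h.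
by apply: (addrI (J 0)); rewrite addr0 -h.
Qed.
Lemma JDl x y : J (x + y) = J x + J y.
Proof. by have := JD 1 x y; rewrite !scale1r. Qed.
Lemma JZ a x : J (a *: x) = a *: J x.
Proof. by have := JD a x 0; rewrite !addr0 J0 addr0. Qed.
Lemma JN x : J (- x) = - J x.
Proof. by rewrite -scaleN1r JZ scaleN1r. Qed.
Lemma JB x y : J (x - y) = J x - J y.
Proof. by rewrite JDl JN. Qed.

Lemma jpE x y : jp x y = ip (J x) y. Proof. by []. Qed.
Lemma jpDl x y z : jp (x + y) z = jp x z + jp y z.
Proof. by rewrite !jpE JDl ipDl. Qed.
Lemma jpZl a x z : jp (a *: x) z = a * jp x z.
Proof. by rewrite !jpE JZ ipZl. Qed.
Lemma jpNl x z : jp (- x) z = - jp x z.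
Proof. by rewrite !jpE JN ipNl. Qed.
Lemma jpBl x y z : jp (x - y) z = jp x z - jp y z.
Proof. by rewrite jpDl jpNl. Qed.
Lemma jpC x y : jp y x = (jp x y)^*.
Proof. by rewrite !jpE ipC ipJ. Qed.
Lemma jpDr x y z : jp z (x + y) = jp z x + jp z y.
Proof. by rewrite !jpE ipDr. Qed.
Lemma jpZr a x z : jp z (a *: x) = a^* * jp z x.
Proof. by rewrite !jpE ipZr. Qed.
Lemma jpNr x z : jp z (- x) = - jp z x.
Proof. by rewrite !jpE ipNr. Qed.
Lemma jpBr x y z : jp z (x - y) = jp z x - jp z y.
Proof. by rewrite jpDr jpNr. Qed.
Lemma jp0l z : jp 0 z = 0. Proof. by rewrite jpE J0 ip0l. Qed.
Lemma jp0r z : jp z 0 = 0. Proof. by rewrite jpE ip0r. Qed.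
Lemma ip_jp x y : ip x y = jp (J x) y. Proof. by rewrite jpE JJ. Qed.
Lemma jpJ x y : jp (J x) (J y) = jp x y.
Proof. by rewrite !jpE JJ -ipJ. Qed.

Lemma jp_ge0 x : 0 <= jp x x.
Proof.
have [->|h] := eqVneq x 0; first by rewrite jp0l.
exact: ltW (jp_gt0 h).
Qed.
Lemma jp_eq0 x : jp x x = 0 -> x = 0.
Proof. move=> h; case: (eqVneq x 0) => // hx; have := jp_gt0 hx; by rewrite h ltxx. Qed.

Lemma nrm_ge0 x : 0 <= nrm x. Proof. exact: sqrtr_ge0. Qed.
Lemma nrm2 x : nrm x ^+ 2 = Re (jp x x).
Proof. by rewrite /jnorm sqr_sqrtr // ge0_Re // jp_ge0. Qed.
Lemma jp_nrm x : jp x x = ((nrm x ^+ 2)%:C)%C.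
Proof. by rewrite nrm2 -ge0_real // jp_ge0. Qed.
Lemma nrm_eq0 x : nrm x = 0 -> x = 0.
Proof. by move=> h; apply: jp_eq0; rewrite jp_nrm h expr0n. Qed.
Lemma nrm0 : nrm 0 = 0.
Proof. by rewrite /jnorm jp0l sqrtr0. Qed.
Lemma Im_jp x : Im (jp x x) = 0.
Proof. by rewrite jp_nrm. Qed.
Lemma nrmJ x : nrm (J x) = nrm x.
Proof. by rewrite /jnorm jpJ. Qed.
End Krein0.
Definition cn2 (R : realType) (z : R[i]) : R := complex.Re z ^+ 2 + complex.Im z ^+ 2.

Lemma CSreal (R : realType) (a b c : R) : 0 <= c ->
  (forall r, 0 <= a - 2 * r * b + r ^+ 2 * c) -> b ^+ 2 <= a * c.
Proof.
move=> c0 H; have a0 : 0 <= a by have := H 0; rewrite !(mul0r, mulr0, expr0n) /=; lra.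
have [cp|] := ltrP 0 c.
  have := H (b / c); set t := b / c => Ht.
  have tb : t * c = b by rewrite /t mulfVK // gt_eqF.
  rewrite -tb in Ht *; have := mulr_ge0 (ltW cp) Ht; nra.
move=> cle; have -> : c = 0 by apply/le_anti; rewrite cle c0.
rewrite mulr0; have [b0|bn0] := eqVneq b 0; first by rewrite b0 expr0n.
have := H ((a + 1) / (2 * b)); set r := (a + 1) / (2 * b) => Hr.
have rb : r * (2 * b) = a + 1 by rewrite /r mulfVK // mulf_neq0 // pnatr_eq0.
exfalso; nra.
Qed.

Lemma sq_le (R : realType) (b c : R) : 0 <= c -> b ^+ 2 <= c ^+ 2 -> b <= c /\ - c <= b.
Proof. move=> c0 h; split; nra. Qed.

Section CSgen.
Variables (R : realType) (V : lmodType R[i]) (F : V -> V -> R[i]).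
Hypothesis HL : forall a u v w, F (a *: u + v) w = a * F u w + F v w.
Hypothesis HH : forall u w, F w u = (F u w)^*.
Local Notation Re := complex.Re.

Lemma FBl (t : R[i]) x y w : F (x - t *: y) w = F x w - t * F y w.
Proof. by rewrite addrC -scaleNr HL mulNr addrC. Qed.

Lemma CS_form x y : 0 <= Re (F y y) ->
  (forall r : R, 0 <= Re (F (x - (r%:C)%C *: y) (x - (r%:C)%C *: y))) ->
  Re (F x y) ^+ 2 <= Re (F x x) * Re (F y y).
Proof.
move=> Hyy H.
apply: CSreal => // r; have := H r.
rewrite FBl HH FBl ReB ReMC ReJ.
rewrite [F y (x - _)]HH FBl ReJ ReB ReMC.
have -> : Re (F y x) = Re (F x y) by rewrite HH ReJ.
set a := Re (F x x); set b := Re (F x y); set c := Re (F y y).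
rewrite ReB ReMC; move=> h; nra.
Qed.
End CSgen.
Section Krein1.
Variables (R : realType) (V : lmodType R[i]) (ip : V -> V -> R[i]) (J : V -> V).
Hypothesis HK : krein_space ip J.
Local Notation Re := complex.Re.
Local Notation Im := complex.Im.
Local Notation jp := (jip ip J).
Local Notation nrm := (jnorm ip J).

Lemma jpD a u v w : jp (a *: u + v) w = a * jp u w + jp v w.
Proof. by rewrite jpDl // jpZl. Qed.

Lemma Re_jp_ge0 x : 0 <= Re (jp x x).
Proof. by rewrite -nrm2 // sqr_ge0. Qed.

Lemma CSjp_Re x y : Re (jp x y) ^+ 2 <= nrm x ^+ 2 * nrm y ^+ 2.
Proof.
rewrite !nrm2 //; apply: CS_form; [exact: jpD | exact: jpC | exact: Re_jp_ge0 | ].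
by move=> r; exact: Re_jp_ge0.
Qed.

Lemma nrm_sq_ge0 x : 0 <= nrm x ^+ 2. Proof. exact: sqr_ge0. Qed.

Lemma CSjp x y : cn2 (jp x y) <= nrm x ^+ 2 * nrm y ^+ 2.
Proof.
set z := jp x y; set u := z^* *: x.
have h1 : jp u y = ((cn2 z)%:C)%C by rewrite jpZl // mulrC mulJ.
have h2 : Re (jp u u) = cn2 z * nrm x ^+ 2.
  rewrite jpZl // jpZr // conjCK mulrA [_ * z]mulrC mulJ jp_nrm // -rmorphM.
  by [].
have := CSjp_Re u y; rewrite h1 ReC !nrm2 // h2 -!nrm2 //.
have hz : 0 <= cn2 z by rewrite /cn2 addr_ge0 // sqr_ge0.
have := nrm_sq_ge0 x; have := nrm_sq_ge0 y; nra.
Qed.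

Lemma cn2_Re (z : R[i]) : Re z ^+ 2 <= cn2 z.
Proof. by rewrite /cn2 lerDl sqr_ge0. Qed.
Lemma cn2_Im (z : R[i]) : Im z ^+ 2 <= cn2 z.
Proof. by rewrite /cn2 lerDr sqr_ge0. Qed.
Lemma cn2_ge0 (z : R[i]) : 0 <= cn2 z.
Proof. by rewrite /cn2 addr_ge0 // sqr_ge0. Qed.

Lemma Re_jp_le x y : Re (jp x y) <= nrm x * nrm y /\ - (nrm x * nrm y) <= Re (jp x y).
Proof.
apply: sq_le; first by rewrite mulr_ge0 // nrm_ge0.
by rewrite exprMn; apply: le_trans (CSjp x y); apply: cn2_Re.
Qed.
Lemma Im_jp_le x y : Im (jp x y) <= nrm x * nrm y /\ - (nrm x * nrm y) <= Im (jp x y).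
Proof.
apply: sq_le; first by rewrite mulr_ge0 // nrm_ge0.
by rewrite exprMn; apply: le_trans (CSjp x y); apply: cn2_Im.
Qed.
Lemma Re_ip_le x y : Re (ip x y) <= nrm x * nrm y /\ - (nrm x * nrm y) <= Re (ip x y).
Proof. by rewrite (ip_jp HK) -(nrmJ HK x); apply: Re_jp_le. Qed.
Lemma cn2_ip x y : cn2 (ip x y) <= nrm x ^+ 2 * nrm y ^+ 2.
Proof. by rewrite (ip_jp HK) -(nrmJ HK x); apply: CSjp. Qed.

Lemma nrm_sqD x y : nrm (x + y) ^+ 2 = nrm x ^+ 2 + 2 * Re (jp x y) + nrm y ^+ 2.
Proof.
rewrite !nrm2 // jpDl // !jpDr // !ReD [jp y x]jpC // ReJ; ring.
Qed.

Lemma nrmD x y : nrm (x + y) <= nrm x + nrm y.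
Proof.
have h := nrm_sqD x y; have [h1 _] := Re_jp_le x y.
have := nrm_ge0 ip J (x + y); have := nrm_ge0 ip J x; have := nrm_ge0 ip J y.
nra.
Qed.

Lemma nrmZ2 a x : nrm (a *: x) ^+ 2 = cn2 a * nrm x ^+ 2.
Proof.
by rewrite !nrm2 // jpZl // jpZr // mulrA mulJ (jp_nrm HK) -rmorphM.
Qed.

Lemma nrmZ_le a x : nrm (a *: x) <= (1 + cn2 a) * nrm x.
Proof.
have h := nrmZ2 a x; have c0 := cn2_ge0 a.
have n0 := nrm_ge0 ip J x.
have h2 : nrm (a *: x) ^+ 2 <= ((1 + cn2 a) * nrm x) ^+ 2.
  rewrite h exprMn; apply: ler_wpM2r; first exact: sqr_ge0. nra.
by have [] := sq_le _ h2; first by rewrite mulr_ge0 // addr_ge0.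
Qed.

Lemma nrmN x : nrm (- x) = nrm x.
Proof. by rewrite /jnorm jpNl // jpNr // opprK. Qed.
Lemma nrmB x y : nrm (x - y) = nrm (y - x).
Proof. by rewrite -nrmN opprB. Qed.

End Krein1.
Lemma arch_inv (R : realType) (e : R) : 0 < e -> exists N : nat, (N.+1%:R)^-1 < e.
Proof.
move=> e0; exists (Num.Def.archi_bound e^-1).
have ei : 0 < e^-1 by rewrite invr_gt0.
have h := archi_boundP (ltW ei).
set n := (Num.Def.archi_bound e^-1).
have hn : (n%:R : R) < n.+1%:R by rewrite ltr_nat.
have p : (0 : R) < n.+1%:R by rewrite ltr0n.
have := mulfV (lt0r_neq0 p); have := mulfV (lt0r_neq0 e0).
have pi : 0 < (n.+1%:R : R)^-1 by rewrite invr_gt0.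
set a := (n.+1%:R : R)^-1; set b := e^-1 => h1 h2.
have hb : b < n.+1%:R by apply: lt_trans hn.
nra.
Qed.

Lemma small_le0 (R : realType) (a K : R) : 0 <= K ->
  (forall e, 0 < e -> exists2 d, d <= e & a <= d * K) -> a <= 0.
Proof.
move=> K0 H; case: (lerP a 0) => // a0.
have hp : 0 < a / (2 * (K + 1)) by rewrite divr_gt0 // mulr_gt0 // ltr_pwDr.
have [d de ad] := H _ hp.
set t := a / (2 * (K + 1)) in de.
have tt : t * (2 * (K + 1)) = a by rewrite /t mulfVK // gt_eqF // mulr_gt0 // ltr_pwDr.
have : a <= t * K by apply: le_trans ad _; apply: ler_wpM2r.
nra.
Qed.

Lemma cn2_eq0 (R : realType) (z : R[i]) : cn2 z <= 0 -> z = 0.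
Proof.
rewrite /cn2 => h; have h1 := sqr_ge0 (complex.Re z); have h2 := sqr_ge0 (complex.Im z).
apply: eqC; rewrite /=; apply/eqP; rewrite -sqrf_eq0; apply/eqP; lra.
Qed.

Section Krein2.
Variables (R : realType) (V : lmodType R[i]) (ip : V -> V -> R[i]) (J : V -> V).
Hypothesis HK : krein_space ip J.
Local Notation Re := complex.Re.
Local Notation Im := complex.Im.
Local Notation jp := (jip ip J).
Local Notation nrm := (jnorm ip J).

Lemma conv_sq u x : jconverges ip J u x ->
  forall e, 0 < e -> exists N, forall n, (N <= n)%N -> nrm (u n - x) ^+ 2 <= e.
Proof.
move=> hc e e0; have m0 : 0 < Num.min e 1 by rewrite lt_min e0 ltr01.
have [N HN] := hc _ m0; exists N => n /HN; rewrite lt_min => /andP[h1 h2].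
have := nrm_ge0 ip J (u n - x); nra.
Qed.

Lemma sub_jclosure S : S `<=` jclosure ip J S.
Proof. by move=> f Sf e e0; exists f => //; rewrite subrr nrm0. Qed.

Lemma jclosure_closed S : jclosed ip J (jclosure ip J S).
Proof.
move=> u x hu hc e e0; have e2 : 0 < e / 2 by rewrite divr_gt0.
have [N HN] := hc _ e2; have [g Sg hg] := hu N _ e2.
exists g => //; have h := HN N (leqnn N); rewrite (nrmB HK) in h.
have := nrmD HK (x - u N) (u N - g); rewrite addrA subrK => h2.
apply: le_lt_trans h2 _; lra.
Qed.

Lemma jclosure_sub S Y : S `<=` Y -> jclosed ip J Y -> jclosure ip J S `<=` Y.
Proof.
move=> SY cY f hf.
pose u n := xget 0 [set g | S g /\ nrm (f - g) < (n.+1%:R)^-1].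
have hu n : S (u n) /\ nrm (f - u n) < (n.+1%:R)^-1.
  apply: (@xgetPex _ 0 [set g | S g /\ nrm (f - g) < (n.+1%:R)^-1]).
  have hp : 0 < (n.+1%:R : R)^-1 by rewrite invr_gt0 ltr0Sn.
  by have [g Sg hg] := hf _ hp; exists g.
apply: (cY u) => [n|]; first by apply: SY; case: (hu n).
move=> e e0; have [N HN] := arch_inv e0; exists N => n Nn.
rewrite (nrmB HK); apply: lt_trans (proj2 (hu n)) _; apply: le_lt_trans HN.
by rewrite lef_pV2 ?posrE ?ltr0Sn // ler_nat.
Qed.

Lemma jclosure_subspace S : Defs.subspace S -> Defs.subspace (jclosure ip J S).
Proof.
rewrite /Defs.subspace => -[S0 SD]; split; first exact: sub_jclosure.
move=> a x y hx hy e e0; set K := 1 + cn2 a.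
have K0 : 0 < K by have := cn2_ge0 a; rewrite /K; lra.
have e1 : 0 < e / 2 / K by rewrite !divr_gt0.
have e2 : 0 < e / 2 by rewrite divr_gt0.
have [x' Sx hx'] := hx _ e1; have [y' Sy hy'] := hy _ e2.
exists (a *: x' + y'); first exact: SD.
have -> : a *: x + y - (a *: x' + y') = a *: (x - x') + (y - y').
  by rewrite scalerBr opprD addrACA.
apply: le_lt_trans (nrmD HK _ _) _.
have h1 := nrmZ_le HK a (x - x').
have h3 : K * nrm (x - x') < e / 2.
  by rewrite -ltr_pdivlMl // mulrC.
rewrite -/K in h1; lra.
Qed.

Lemma jorth_cs X : closed_subspace ip J (jorth ip J X).
Proof.
split; first split.
- by move=> g _; rewrite jp0l.
- by move=> a x y hx hy g Xg; rewrite (jpD HK) hx // hy // mulr0 addr0.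
move=> u x hu hc g Xg; apply: cn2_eq0.
apply: (small_le0 (nrm_sq_ge0 ip J g)) => e e0.
have [N HN] := conv_sq hc e0; exists (nrm (u N - x) ^+ 2); first exact: HN.
have -> : jp x g = - jp (u N - x) g by rewrite (jpBl HK) hu // sub0r opprK.
have -> : cn2 (- jp (u N - x) g) = cn2 (jp (u N - x) g) by rewrite /cn2 ReN ImN !sqrrN.
exact: CSjp.
Qed.

Lemma korth_cs X : closed_subspace ip J (korth ip X).
Proof.
split; first split.
- by move=> g _; rewrite (ip0l HK).
- by move=> a x y hx hy g Xg; rewrite (ipD HK) hx // hy // mulr0 addr0.
move=> u x hu hc g Xg; apply: cn2_eq0.
apply: (small_le0 (nrm_sq_ge0 ip J g)) => e e0.
have [N HN] := conv_sq hc e0; exists (nrm (u N - x) ^+ 2); first exact: HN.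
have -> : ip x g = - ip (u N - x) g by rewrite (ipBl HK) hu // sub0r opprK.
have -> : cn2 (- ip (u N - x) g) = cn2 (ip (u N - x) g) by rewrite /cn2 ReN ImN !sqrrN.
exact: cn2_ip.
Qed.

Lemma cs_setI X Y : closed_subspace ip J X -> closed_subspace ip J Y ->
  closed_subspace ip J (X `&` Y).
Proof.
rewrite /closed_subspace /Defs.subspace => -[[X0 XD] cX] [[Y0 YD] cY]; split; first split => //.
- by move=> a x y [? ?] [? ?]; split; [apply: XD | apply: YD].
move=> u x hu hc; split; [apply: (cX u) | apply: (cY u)] => // n; by case: (hu n).
Qed.

Lemma Jimage_cs X : closed_subspace ip J X -> closed_subspace ip J (Jimage J X).
Proof.
rewrite /closed_subspace /Defs.subspace => -[[X0 XD] cX]; split; first split.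
- by exists 0 => //; rewrite (J0 HK).
- move=> a _ _ [x Xx <-] [y Xy <-]; exists (a *: x + y); first exact: XD.
  by rewrite (JD HK).
move=> u x hu hc; exists (J x); last by rewrite (JJ HK).
apply: (cX (fun n => J (u n))).
  by move=> n; case: (hu n) => w Xw <-; rewrite (JJ HK).
move=> e e0; have [N HN] := hc e e0; exists N => n /HN.
by rewrite -(JB HK) (nrmJ HK).
Qed.

End Krein2.
Lemma eps_mono (R : realType) (N n : nat) : (N <= n)%N -> ((n.+1%:R : R)^-1 <= (N.+1%:R)^-1).
Proof. by move=> h; rewrite lef_pV2 ?posrE ?ltr0Sn // ler_nat. Qed.

Lemma eps_gt0 (R : realType) (n : nat) : (0 : R) < (n.+1%:R)^-1.
Proof. by rewrite invr_gt0 ltr0Sn. Qed.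

Lemma cn2D (R : realType) (a b : R[i]) : cn2 (a + b) <= 2 * cn2 a + 2 * cn2 b.
Proof.
rewrite /cn2 ReD ImD.
have := sqr_ge0 (complex.Re a - complex.Re b); have := sqr_ge0 (complex.Im a - complex.Im b).
set x1 := complex.Re a; set x2 := complex.Re b; set y1 := complex.Im a; set y2 := complex.Im b.
rewrite !expr2; nra.
Qed.

Section Krein3.
Variables (R : realType) (V : lmodType R[i]) (ip : V -> V -> R[i]) (J : V -> V).
Hypothesis HK : krein_space ip J.
Local Notation Re := complex.Re.
Local Notation Im := complex.Im.
Local Notation jp := (jip ip J).
Local Notation nrm := (jnorm ip J).

Lemma paral a b : nrm (a + b) ^+ 2 + nrm (a - b) ^+ 2 = 2 * nrm a ^+ 2 + 2 * nrm b ^+ 2.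
Proof.
rewrite !(nrm_sqD HK) (nrmN HK) (jpNr HK) ReN; ring.
Qed.

Lemma conjMC (z : R[i]) (r : R) : (z * (r%:C)%C)^* = z^* * (r%:C)%C.
Proof. case: z => a b; apply: eqC => /=; ring. Qed.

Lemma nrm_sub_proj e y : nrm y != 0 ->
  nrm (e - (jp e y * (((nrm y ^+ 2)^-1)%:C)%C) *: y) ^+ 2 = nrm e ^+ 2 - cn2 (jp e y) / nrm y ^+ 2.
Proof.
move=> ny; set q := nrm y ^+ 2; set z := jp e y; set r := q^-1.
have q0 : q != 0 by rewrite /q expf_neq0.
rewrite (nrm2 HK) (jpBl HK) !(jpBr HK) !(jpZl HK) !(jpZr HK).
rewrite [jp y e](jpC HK) -/z !(jp_nrm HK) -/q conjMC.
set c := cn2 z; set qe := nrm e ^+ 2.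
have hc : (c%:C)%C = z * z^* by rewrite mulJ.
have -> : (qe%:C)%C - z^* * (r%:C)%C * z - (z * (r%:C)%C * z^* - z * (r%:C)%C * (z^* * (r%:C)%C * (q%:C)%C))
   = (qe%:C)%C - (r%:C)%C * (z * z^*) - (r%:C)%C * (z * z^*) + (r%:C)%C * ((r%:C)%C * ((q%:C)%C * (z * z^*))).
  by ring.
rewrite -hc !ReD !ReN !ReMC !ReC /r; field; exact: q0.
Qed.
End Krein3.
Lemma mulCC (R : realType) (x y : R) : (x%:C)%C * (y%:C)%C = ((x * y)%:C)%C :> R[i].
Proof. apply: eqC => /=; ring. Qed.
Lemma twoC (R : realType) : ((2 : R)%:C)%C = 1 + 1 :> R[i].
Proof. apply: eqC => /=; ring. Qed.
Lemma oneC (R : realType) : ((1 : R)%:C)%C = 1 :> R[i].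
Proof. by []. Qed.

Section Krein4.
Variables (R : realType) (V : lmodType R[i]) (ip : V -> V -> R[i]) (J : V -> V).
Hypothesis HK : krein_space ip J.
Local Notation Re := complex.Re.
Local Notation Im := complex.Im.
Local Notation jp := (jip ip J).
Local Notation nrm := (jnorm ip J).

Lemma proj_exists X f : closed_subspace ip J X ->
  exists p, X p /\ (forall x, X x -> jp (f - p) x = 0).
Proof.
rewrite /closed_subspace /Defs.subspace => -[[X0 XD] cX].
have XDD x y : X x -> X y -> X (x + y) by move=> hx hy; have := XD 1 x y hx hy; rewrite scale1r.
set S2 := [set r : R | exists2 x, X x & r = nrm (f - x) ^+ 2].
have S2n : S2 !=set0 by exists (nrm (f - 0) ^+ 2); exists 0.
have S2lb : has_lbound S2 by exists 0 => r [x _ ->]; exact: sqr_ge0.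
set d := inf S2.
have dle x : X x -> d <= nrm (f - x) ^+ 2.
  by move=> Xx; apply: (ge_inf S2lb); exists x.
have hx n : exists x, X x /\ nrm (f - x) ^+ 2 < d + (n.+1%:R)^-1.
  have [r [x Xx ->] hr] := inf_adherent (eps_gt0 R n) (conj S2n S2lb).
  by exists x.
pose xs n := xget 0 [set x | X x /\ nrm (f - x) ^+ 2 < d + (n.+1%:R)^-1].
have hxs n : X (xs n) /\ nrm (f - xs n) ^+ 2 < d + (n.+1%:R)^-1.
  exact: (xgetPex 0 (hx n)).
have key n m : nrm (xs n - xs m) ^+ 2 <= 2 * (n.+1%:R)^-1 + 2 * (m.+1%:R)^-1.
  have [Xn hn] := hxs n; have [Xm hm] := hxs m.
  have := paral HK (f - xs n) (f - xs m).
  set s := xs n + xs m; set mid := ((2^-1 : R)%:C)%C *: s.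
  have Xmid : X mid by have := XD ((2^-1 : R)%:C)%C s 0 (XDD _ _ Xn Xm) X0; rewrite addr0.
  have E1 : f - xs n + (f - xs m) = ((2 : R)%:C)%C *: (f - mid).
    rewrite scalerBr /mid scalerA mulCC mulfV ?pnatr_eq0 // oneC scale1r twoC scalerDl scale1r.
    by rewrite /s opprD !addrA; congr (_ - _); rewrite addrAC.
  have E2 : f - xs n - (f - xs m) = xs m - xs n by rewrite opprB addrC addrA subrK.
  rewrite E1 E2 (nrmZ2 HK) (nrmB HK (xs m)).
  have -> : cn2 ((2 : R)%:C)%C = 4 by rewrite /cn2 ReC ImC; rewrite expr0n addr0; ring.
  have := dle _ Xmid.
  move: hn hm; set A := nrm (f - mid) ^+ 2; set B := nrm (xs n - xs m) ^+ 2.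
  set C1 := nrm (f - xs n) ^+ 2; set C2 := nrm (f - xs m) ^+ 2.
  set e1 := (n.+1%:R : R)^-1; set e2 := (m.+1%:R : R)^-1; lra.
have cau : jcauchy ip J xs.
  move=> e e0; have e4 : 0 < e ^+ 2 / 4 by rewrite divr_gt0 // exprn_gt0.
  have [N HN] := arch_inv e4; exists N => n m Nn Nm.
  have := key n m; have := eps_mono R Nn; have := eps_mono R Nm.
  have := nrm_ge0 ip J (xs n - xs m); have := eps_gt0 R N.
  set a := nrm (xs n - xs m); set b := (N.+1%:R : R)^-1.
  move: HN; rewrite -/b => HN h1 h2 h3 h4 h5.
  have h6 : a ^+ 2 < e ^+ 2.
    move: h5 h4 h3 HN; set A := a ^+ 2; set E := e ^+ 2.
    set c1 := (n.+1%:R : R)^-1; set c2 := (m.+1%:R : R)^-1; lra.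
  nra.
have [p hp] := complete HK cau.
have Xp : X p by apply: (cX xs) => // n; case: (hxs n).
exists p; split => // y Xy.
have hq0 := nrm_sq_ge0 ip J y.
have zn n : cn2 (jp (f - xs n) y) <= (n.+1%:R)^-1 * nrm y ^+ 2.
  have [y0|ny] := eqVneq (nrm y) 0.
    rewrite (nrm_eq0 HK y0) (jp0r HK).
    have -> : cn2 (0 : R[i]) = 0 by rewrite /cn2 /= !expr2 !mul0r addr0.
    by rewrite mulr_ge0 // ?sqr_ge0 // ltW // eps_gt0.
  set z := jp (f - xs n) y; set q := nrm y ^+ 2.
  set t := z * ((q^-1)%:C)%C.
  have Xw : X (xs n + t *: y) by rewrite addrC; apply: XD => //; case: (hxs n).
  have := dle _ Xw; rewrite opprD addrA (nrm_sub_proj HK _ ny) -/z -/q.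
  have qp : 0 < q by rewrite /q exprn_gt0 // lt_neqAle eq_sym ny nrm_ge0.
  have [_ hn] := hxs n; have := cn2_ge0 z.
  set c := cn2 z => c0 h1.
  have cq : c = c / q * q by rewrite mulfVK // gt_eqF.
  rewrite cq; set w := c / q in h1 *.
  have hw : w <= (n.+1%:R)^-1.
    move: h1 hn; clearbody w; set A := nrm (f - xs n) ^+ 2.
    set e1 := (n.+1%:R : R)^-1; clearbody A e1; lra.
  by apply: ler_wpM2r => //; exact: ltW.
apply: cn2_eq0.
have K0 : 0 <= 2 * nrm y ^+ 2 by rewrite mulr_ge0.
apply: (small_le0 K0) => e e0.
have e2 : 0 < e / 2 by rewrite divr_gt0.
have [N1 HN1] := arch_inv e2; have [N2 HN2] := conv_sq hp e2.
set n := maxn N1 N2.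
exists ((n.+1%:R)^-1 + nrm (xs n - p) ^+ 2).
  have := eps_mono R (leq_maxl N1 N2); have := HN2 n (leq_maxr N1 N2); rewrite -/n.
  move: HN1; set a := (n.+1%:R : R)^-1; set b := (N1.+1%:R : R)^-1.
  set c := nrm (xs n - p) ^+ 2; clearbody a b c; lra.
have -> : f - p = (f - xs n) + (xs n - p) by rewrite addrA subrK.
rewrite (jpDl HK); apply: le_trans (cn2D _ _) _.
have := zn n; have := CSjp HK (xs n - p) y.
set a := (n.+1%:R : R)^-1; set c := nrm (xs n - p) ^+ 2; set q := nrm y ^+ 2.
set u1 := cn2 _; set u2 := cn2 _; clearbody a c q u1 u2; nra.
Qed.

Lemma proj_uniq X f p : Defs.subspace X -> X p -> (forall x, X x -> jp (f - p) x = 0) ->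
  proj ip J X f = p.
Proof.
rewrite /Defs.subspace => -[X0 XD] Xp hp.
have [Xq hq] : X (proj ip J X f) /\ (forall x, X x -> jp (f - proj ip J X f) x = 0).
  rewrite /proj; set P := [set p0 | X p0 /\ (forall x, X x -> jp (f - p0) x = 0)].
  have : P (xget 0 P) by apply: xgetPex; exists p.
  by [].
set q := proj ip J X f in Xq hq *.
have Xpq : X (q - p) by rewrite addrC -scaleN1r; apply: XD.
apply/eqP; rewrite -subr_eq0; apply/eqP; apply: (jp_eq0 HK).
have E : (f - p) - (f - q) = q - p by rewrite opprB addrC addrA subrK.
by rewrite -{1}E (jpBl HK) hq // hp // subrr.
Qed.

Lemma proj_spec X f : closed_subspace ip J X ->
  X (proj ip J X f) /\ (forall x, X x -> jp (f - proj ip J X f) x = 0).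
Proof.
move=> cs; rewrite /proj; set P := [set p0 | X p0 /\ (forall x, X x -> jp (f - p0) x = 0)].
have : P (xget 0 P) by apply: xgetPex; apply: proj_exists.
by [].
Qed.

End Krein4.
Section Main.
Variables (R : realType) (V : lmodType R[i]) (ip : V -> V -> R[i]) (J : V -> V).
Variables (I : choiceType) (W : I -> set V).
Hypothesis HK : krein_space ip J.
Hypothesis HW : forall i, closed_subspace ip J (W i).
Local Notation Re := complex.Re.
Local Notation Im := complex.Im.
Local Notation jp := (jip ip J).
Local Notation nrm := (jnorm ip J).
Local Notation M := (closed_sum ip J W).
Local Notation T f := (proj ip J M (J f)).

Lemma Wsc i a x : W i x -> W i (a *: x).
Proof.
move=> h; have [[W0 WD] _] := HW i; have := WD a x 0 h W0; by rewrite addr0.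
Qed.

Lemma span_subspace : Defs.subspace (sum_span W).
Proof.
split.
  have f0 : 'I_0 -> I by case.
  exists 0%N, f0, (fun _ => 0); split; last by rewrite big_ord0.
  by case.
move=> a x y [n1 [i1 [w1 [h1 ->]]]] [n2 [i2 [w2 [h2 ->]]]].
exists (n1 + n2)%N.
exists (fun k => match split k with inl p => i1 p | inr q => i2 q end).
exists (fun k => match split k with inl p => a *: w1 p | inr q => w2 q end).
split.
  move=> k; case: (split k) => [p|q]; [exact: Wsc | exact: h2].
rewrite big_split_ord /= scaler_sumr; congr (_ + _); apply: eq_bigr => k _.
  by rewrite (unsplitK (inl k) : split (lshift n2 k) = inl k).
by rewrite (unsplitK (inr k) : split (rshift n1 k) = inr k).
Qed.

Lemma M_cs : closed_subspace ip J M.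
Proof.
split; first by apply: jclosure_subspace => //; apply: span_subspace.
exact: (jclosure_closed HK).
Qed.

Lemma W_sub_M i : W i `<=` M.
Proof.
move=> x h; apply: (sub_jclosure HK); exists 1%N; exists (fun _ => i); exists (fun _ => x); split => //.
by rewrite big_ord1.
Qed.

Lemma proj_id X f : Defs.subspace X -> X f -> proj ip J X f = f.
Proof. by move=> sX Xf; apply: (proj_uniq HK) => // x _; rewrite subrr jp0l. Qed.

Lemma T_spec f : M (T f) /\ (forall x, M x -> jp (J f - T f) x = 0).
Proof. exact: (proj_spec HK _ M_cs). Qed.

Lemma ip_T f g : M g -> ip f g = jp (T f) g.
Proof.
move=> Mg; rewrite (ip_jp HK).
have := (T_spec f).2 g Mg; rewrite (jpBl HK) => /eqP; rewrite subr_eq0 => /eqP.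
by [].
Qed.

Lemma PW_T i f : proj ip J (W i) (J f) = proj ip J (W i) (T f).
Proof.
have [[W0 WD] cW] := HW i.
have [Wp hp] := proj_spec HK (J f) (HW i).
apply/esym; apply: (proj_uniq HK) => // x Wx.
have E : (J f - proj ip J (W i) (J f)) - (J f - T f) = T f - proj ip J (W i) (J f).
  by rewrite opprB addrC addrA subrK.
rewrite -E.
by rewrite (jpBl HK) hp // (T_spec f).2 ?subrr //; apply: W_sub_M Wx.
Qed.

Lemma krein_term i f : M f ->
  Re `|ip (proj ip J (Jimage J M) (proj ip J (W i) (J (proj ip J M f)))) f|
  = nrm (proj ip J (W i) (T f)) ^+ 2.
Proof.
move=> Mf; have [sM _] := M_cs; rewrite (proj_id sM Mf).
set y := proj ip J (W i) (J f).
have [Wy hy] := proj_spec HK (J f) (HW i).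
have cJM := Jimage_cs HK M_cs.
have [_ hP] := proj_spec HK y cJM.
set a := proj ip J (Jimage J M) y.
have JfM : Jimage J M (J f) by exists f.
have E1 : ip a f = jp a (J f) by rewrite jpE (ipJ HK) (JJ HK).
have E2 : jp a (J f) = jp y (J f).
  have := hP _ JfM; rewrite (jpBl HK) => /eqP; rewrite subr_eq0 => /eqP.
  by move=> ->.
have E3 : jp y (J f) = jp y y.
  have := hy _ Wy; rewrite -/y => h.
  have : jp y (J f - y) = 0 by rewrite (jpC HK) h conjC0.
  rewrite (jpBr HK) => /eqP; rewrite subr_eq0 => /eqP.
  by [].
rewrite E1 E2 E3 (jp_nrm HK) normRC ?sqr_ge0 // ReC -(PW_T i f).
by [].
Qed.

Lemma ks_eq (v : I -> R) f : M f -> krein_sum ip J W v M f = fusion_sum ip J W v (T f).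
Proof.
move=> Mf; rewrite /krein_sum /fusion_sum; congr (esum _ _); apply: funext => i.
by rewrite krein_term.
Qed.

End Main.
Section Parts.
Variables (R : realType) (V : lmodType R[i]) (ip : V -> V -> R[i]) (J : V -> V).
Variables (I : choiceType) (W : I -> set V) (v : I -> R).
Hypothesis HK : krein_space ip J.
Hypothesis HW : forall i, closed_subspace ip J (W i).
Local Notation Re := complex.Re.
Local Notation Im := complex.Im.
Local Notation jp := (jip ip J).
Local Notation nrm := (jnorm ip J).
Local Notation M := (closed_sum ip J W).
Local Notation T f := (proj ip J M (J f)).
Local Notation s g := (complex.Re (ip g g)).

Lemma MB x y (a : R[i]) : M x -> M y -> M (x - a *: y).
Proof.
have [[M0 MD] _] := M_cs HK HW => Mx My.
by rewrite addrC -scaleNr; apply: MD.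
Qed.

Lemma M0 : M 0.
Proof. by have [[M0 _] _] := M_cs HK HW. Qed.

Lemma CS_ip x y : M x -> M y -> (forall g, M g -> 0 <= s g) ->
  Re (ip x y) ^+ 2 <= s x * s y.
Proof.
move=> Mx My sg; apply: CS_form; [exact: ipD HK | exact: ipC HK | exact: sg | ].
by move=> r; apply: sg; apply: MB.
Qed.

Lemma TM f : M (T f). Proof. exact: (T_spec HK HW f).1. Qed.

Lemma Tlin a x y : T (a *: x + y) = a *: T x + T y.
Proof.
have [[_ MD] _] := M_cs HK HW.
apply: (proj_uniq HK) => //; first by have [[]] := M_cs HK HW.
  by apply: MD; apply: TM.
move=> w Mw.
have -> : J (a *: x + y) - (a *: T x + T y) = a *: (J x - T x) + (J y - T y).
  by rewrite (JD HK) scalerBr opprD addrACA.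
by rewrite (jpD HK) !(T_spec HK HW _).2 // mulr0 addr0.
Qed.

Lemma T0 : T 0 = 0.
Proof. by rewrite (J0 HK) proj_id //; [have [[]] := M_cs HK HW | apply: M0]. Qed.

Lemma ks_ge0 f : (0 <= krein_sum ip J W v M f)%E.
Proof.
apply: esum_ge0 => i _; rewrite lee_fin mulr_ge0 ?sqr_ge0 // ge0_Re //.
Qed.

Lemma part1 : bessel_family ip J W v -> krein_frame_bounds ip J W v M ->
  uniformly_J_positive ip J (deficiency ip J M).
Proof.
rewrite /bessel_family /krein_frame_bounds => -[C C0 HC] [A [B [A0 AB Hb]]].
have [sM cM] := M_cs HK HW.
have B0 : 0 < B by apply: lt_le_trans AB.
have s_ge0 g : M g -> 0 <= s g.
  move=> Mg; have [_ hu] := Hb g Mg; have := le_trans (ks_ge0 g) hu.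
  by rewrite lee_fin pmulr_rge0.
have low g : M g -> A * s g <= C * nrm (T g) ^+ 2.
  move=> Mg; have [hl _] := Hb g Mg; rewrite (ks_eq HK HW v Mg) in hl.
  by have := le_trans hl (HC (T g)); rewrite lee_fin.
have cgood h : M h -> A * nrm (T h) ^+ 2 <= C * s (T h).
  move=> Mh; have Mg := TM h; set g := T h in Mg *.
  have EN : nrm g ^+ 2 = Re (ip h g) by rewrite (ip_T HK HW h Mg) (nrm2 HK).
  have cs := CS_ip Mh Mg s_ge0; rewrite -EN in cs.
  have lh := low h Mh; rewrite -/g in lh.
  have sg0 := s_ge0 g Mg; have sh0 := s_ge0 h Mh.
  set N := nrm g ^+ 2 in EN cs lh *; set sg := s g in cs sg0 *; set sh := s h in cs lh sh0.
  have N0 : 0 <= N by apply: sqr_ge0.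
  have [Ne0|Nn0] := eqVneq N 0; first by rewrite Ne0 mulr0 mulr_ge0 // ltW.
  have Np : 0 < N by rewrite lt_neqAle eq_sym Nn0 N0.
  have h1 : A * (N ^+ 2) <= A * (sh * sg) by apply: ler_wpM2l => //; apply: ltW.
  have h2 : A * sh * sg <= C * N * sg by apply: ler_wpM2r.
  clearbody N sg sh; nra.
pose RS := [set g | exists2 h, M h & g = T h].
have sRS : Defs.subspace RS.
  split; first by exists 0; [apply: M0 | rewrite T0].
  move=> a _ _ [x Mx ->] [y My ->]; exists (a *: x + y); last by rewrite Tlin.
  by have [[_ MD] _] := M_cs HK HW; apply: MD.
pose Rc := jclosure ip J RS.
have cRc : closed_subspace ip J Rc.
  by split; [apply: jclosure_subspace | apply: jclosure_closed].
have RcM : Rc `<=` M.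
  apply: jclosure_sub => //; by move=> _ [h _ ->]; apply: TM.
have Rgood f : Rc f -> A * nrm f ^+ 2 <= C * s f.
  move=> Rf; rewrite -subr_le0.
  set nf := nrm f.
  have nf0 : 0 <= nf by apply: nrm_ge0.
  have K0 : 0 <= (A + C) * (2 * nf + 3).
    by apply: mulr_ge0; lra.
  apply: (small_le0 K0) => e e0.
  have m0 : 0 < Num.min e 1 by rewrite lt_min e0 ltr01.
  have [g0 [h Mh ->] hg] := Rf _ m0.
  set g := T h in hg *.
  set w := f - g in hg *; set d := nrm w.
  exists d.
    by move: hg; rewrite lt_min => /andP[/ltW].
  have d1 : d <= 1 by move: hg; rewrite lt_min => /andP[_ /ltW].
  have d0 : 0 <= d by apply: nrm_ge0.
  have Ef : f = g + w by rewrite /w addrC subrK.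
  have ngf : nrm g <= nf + d.
    have := nrmD HK f (- w); rewrite (nrmN HK) /w opprB addrC subrK.
    by rewrite -/d.
  clearbody w.
  have ng0 : 0 <= nrm g by apply: nrm_ge0.
  have i1 : nf ^+ 2 - nrm g ^+ 2 <= d * (2 * nf + 3).
    have Hnf : nf ^+ 2 = nrm g ^+ 2 + 2 * Re (jp g w) + d ^+ 2.
      by rewrite /nf Ef (nrm_sqD HK).
    have [r1 _] := Re_jp_le HK g w; rewrite -/d in r1.
    rewrite Hnf; move: r1 ngf; set ng := nrm g; set rr := Re (jp g w).
    clearbody ng rr d nf; nra.
  have i2 : s g - s f <= d * (2 * nf + 3).
    rewrite Ef (ipDl HK) !(ipDr HK) !ReD.
    have [_ r1] := Re_ip_le HK g w; have [_ r2] := Re_ip_le HK w g.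
    have [_ r3] := Re_ip_le HK w w; rewrite -/d in r1 r2 r3.
    have q1 := ler_wpM2r d0 ngf; have q2 := ler_wpM2r d0 d1.
    move: r1 r2 r3 q1 q2; set ng := nrm g.
    set x1 := Re (ip g w); set x2 := Re (ip w g); set x3 := Re (ip w w); set x4 := Re (ip g g).
    clearbody ng x1 x2 x3 x4 d nf; nra.
  have i3 := cgood h Mh; rewrite -/g in i3.
  have p1 := ler_wpM2l (ltW A0) i1; have p2 := ler_wpM2l (ltW C0) i2.
  move: p1 p2 i3; set a1 := nf ^+ 2; set a2 := nrm g ^+ 2; set a3 := s g; set a4 := s f.
  clearbody a1 a2 a3 a4 d nf; nra.
have DRc f : deficiency ip J M f -> Rc f.
  move=> [Mf Of].
  have [Rp hp] := proj_spec HK f cRc; set p := proj ip J Rc f in Rp hp.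
  set q := f - p.
  have Mq : M q by rewrite /q -(scale1r p); apply: MB => //; apply: RcM.
  have kq : korth ip M q.
    move=> x Mx; rewrite (ipC HK) (ip_T HK HW x Mq) (jpC HK).
    rewrite hp; first by rewrite !conjC0.
    by apply: (sub_jclosure HK); exists x.
  have iq : isotropic_part ip M q by split.
  have : jp q q = 0.
    rewrite {1}/q (jpBl HK) (Of q iq) (jpC HK) hp // conjC0 subrr //.
  move/(jp_eq0 HK) => /eqP; rewrite subr_eq0 => /eqP ->; exact: Rp.
exists (A / C); first by rewrite divr_gt0.
move=> f Df; have h := Rgood f (DRc f Df).
by rewrite mulrAC ler_pdivrMr // [_ * C]mulrC.
Qed.
Lemma dec f : M f -> exists d, [/\ deficiency ip J M d, T f = T d & s f = s d].
Proof.
move=> Mf.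
have ciso : closed_subspace ip J (isotropic_part ip M).
  exact: cs_setI (M_cs HK HW) (korth_cs HK M).
have [[Mf0 kf0] hf0] := proj_spec HK f ciso.
set f0 := proj ip J (isotropic_part ip M) f in Mf0 kf0 hf0.
set d := f - f0.
have Md : M d by rewrite /d -(scale1r f0); apply: MB.
have Ef : f = d + f0 by rewrite /d subrK.
have Od : jorth ip J (isotropic_part ip M) d by move=> x ix; apply: hf0.
clearbody d.
exists d; split.
- by split.
- apply: (proj_uniq HK); [by have [[]] := M_cs HK HW | exact: TM | ].
  move=> x Mx.
  have -> : J f - T d = (J d - T d) + J f0 by rewrite {1}Ef (JDl HK) addrAC.
  by rewrite (jpDl HK) (T_spec HK HW d).2 // add0r jpE (JJ HK) kf0.
- rewrite {1 2}Ef (ipDl HK) !(ipDr HK) (kf0 d Md) (kf0 f0 Mf0).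
  by rewrite (ipC HK f0 d) (kf0 d Md) conjC0 !addr0.
Qed.

Lemma part2 : fusion_frame_for ip J W v M -> uniformly_J_positive ip J (deficiency ip J M) ->
  krein_frame_bounds ip J W v M.
Proof.
rewrite /fusion_frame_for /uniformly_J_positive => -[A' [B' [A0 AB Hf]]] [g g0 Hg].
have s_ge0 x : M x -> 0 <= s x.
  move=> Mx; have [d [Dd _ ->]] := dec Mx.
  apply: le_trans (Hg d Dd); apply: mulr_ge0; [exact: ltW | exact: sqr_ge0].
have key f : M f -> g * s f <= nrm (T f) ^+ 2 /\ nrm (T f) ^+ 2 <= s f.
  move=> Mf; have [d [[Md Od] -> ->]] := dec Mf.
  have MTd := TM d.
  have sd0 := s_ge0 d Md.
  have N0 := sqr_ge0 (nrm (T d)).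
  split.
  + have Ed : s d = Re (jp (T d) d) by rewrite (ip_T HK HW d Md).
    have cs := CSjp_Re HK (T d) d; rewrite -Ed in cs.
    have gd := Hg d (conj Md Od).
    have [up _] := Re_ip_le HK d d.
    have ndge := nrm_ge0 ip J d.
    move: cs gd up sd0 N0 ndge; set N := nrm (T d) ^+ 2; set nd := nrm d.
    set sd := s d; clearbody N nd sd => cs gd up sd0 N0 ndge.
    have [nd0|ndn0] := eqVneq nd 0.
      rewrite nd0 mulr0 in up; apply: le_trans N0; nra.
    have nd2 : 0 < nd ^+ 2 by rewrite exprn_gt0 // lt_neqAle eq_sym ndn0 ndge.
    have h1 : g * nd ^+ 2 * sd <= sd * sd by apply: ler_wpM2r.
    have h2 : (g * sd) * nd ^+ 2 <= N * nd ^+ 2 by nra.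
    by rewrite ler_pM2r in h2.
  + have EN : nrm (T d) ^+ 2 = Re (ip d (T d)) by rewrite (ip_T HK HW d MTd) (nrm2 HK).
    have cs := CS_ip Md MTd s_ge0; rewrite -EN in cs.
    have [up _] := Re_ip_le HK (T d) (T d).
    have sT0 := s_ge0 _ MTd.
    have nTge := nrm_ge0 ip J (T d).
    move: cs up sT0 sd0 nTge; set N := nrm (T d) ^+ 2; set nT := nrm (T d); set sd := s d.
    set sT := s (T d); move=> cs up sT0 sd0' nTge.
    have Nn : N = nT * nT by rewrite /N expr2.
    rewrite -Nn in up; clearbody N nT sd sT.
    have h := ler_wpM2l sd0' up.
    have N0' : 0 <= N by rewrite Nn mulr_ge0.
    have [->|Nn0] := eqVneq N 0; first by [].
    have Np : 0 < N by rewrite lt_neqAle eq_sym Nn0 N0'.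
    have h3 : N * N <= sd * N by apply: le_trans h; rewrite -expr2.
    by rewrite ler_pM2r in h3.
have B0 : 0 < B' by apply: lt_le_trans AB.
exists (A' * g), (B' + A' * g); split.
- exact: mulr_gt0.
- by set t := A' * g; clearbody t; lra.
move=> f Mf; rewrite (ks_eq HK HW v Mf).
have [lo up] := key f Mf; have [hl hu] := Hf _ (TM f).
have sf0 := s_ge0 f Mf.
split.
- apply: le_trans hl; rewrite lee_fin -mulrA; apply: ler_wpM2l => //; exact: ltW.
- apply: le_trans hu _; rewrite lee_fin.
  have N0 := sqr_ge0 (nrm (T f)).
  move: lo up N0; set N := nrm (T f) ^+ 2; set sf := s f; clearbody N sf => lo up N0.
  have := mulr_ge0 (ltW A0) (ltW g0); nra.
Qed.
End Parts.

Unset Implicit Arguments.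

Theorem theorem3p13 (R : realType) (V : lmodType R[i])
    (ip : V -> V -> R[i]) (J : V -> V)
    (I : choiceType) (W : I -> set V) (v : I -> R) :
  krein_space ip J ->
  (forall i, closed_subspace ip J (W i)) ->
  (forall i, 0 < v i) ->
  bessel_family ip J W v ->
  let M := closed_sum ip J W in
  let D := deficiency ip J M in
  (krein_frame_bounds ip J W v M ->
     [/\ closed_subspace ip J D, D `<=` M & uniformly_J_positive ip J D]) /\
  (fusion_frame_for ip J W v M -> uniformly_J_positive ip J D ->
     krein_frame_bounds ip J W v M).
Proof.
move=> HK HW Hv Hb M D; split.
- move=> Hkb; split.
  + exact: cs_setI (M_cs HK HW) (jorth_cs HK _).
  + by move=> f [].
  + exact: (part1 HK HW Hb Hkb).
- move=> Hff Hu; exact: (part2 HK HW Hff Hu).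
Qed.
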